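(* Let $n\geq 2$ be even, $m>1$, and let $G$ be a non-regular bipartite graph of order $m$ with a bipartition $\{A,B\}$ such that all vertices of $A$ have the same degree and all vertices of $B$ have the same degree. Then $\chi_{ld}(G[\overline{K_{n}}])=2$.
   Context: All graphs are finite, simple and undirected, without isolated vertices. For a graph $G=(V,E)$ of order $N$ without isolated vertices, a bijection $f\colon V\to\{1,2,\dots,N\}$ is a local distance antimagic labeling if $w(u)\neq w(v)$ for every edge $uv$, where $w(u)=\sum_{x\in N(u)}f(x)$ and $N(u)$ is the open neighborhood of $u$. $\chi_{ld}(G)$ is the minimum number of distinct weights over all local distance antimagic labelings of $G$. $\overline{K_n}$ is the edgeless graph on $n$ vertices. The lexicographic product $G[H]$ has vertex set $V(G)\times V(H)$, with $(g,h)$ adjacent to $(g',h')$ iff $gg'\in E(G)$, or $g=g'$ and $hh'\in E(H)$. *)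

(* Defs.v *)
From mathcomp Require Import all_boot.
Set Implicit Arguments. Unset Strict Implicit. Unset Printing Implicit Defensive.

Definition simple_graph (T : finType) (e : rel T) : Prop :=
  symmetric e /\ irreflexive e.

Definition no_isolated (T : finType) (e : rel T) : Prop :=
  forall x, exists y, e x y.

Definition deg (T : finType) (e : rel T) (x : T) : nat := #|[set y | e x y]|.

Definition regular (T : finType) (e : rel T) : Prop :=
  forall x y, deg e x = deg e y.

Definition bipartition (T : finType) (e : rel T) (A B : {set T}) : Prop :=
  A :&: B = set0 /\ A :|: B = [set: T] /\
  forall x y, e x y -> (x \in A) && (y \in B) || (x \in B) && (y \in A).

Definition edgeless (n : nat) : rel 'I_n := fun _ _ => false.

Definition lexprod (T U : finType) (e : rel T) (h : rel U) : rel (T * U) :=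
  fun p q => e p.1 q.1 || (p.1 == q.1) && h p.2 q.2.

(* A labeling f : V -> 'I_N encodes the labels f x + 1 in {1,...,N}, N = |V|;
   it is a bijection iff it is injective. *)
Definition label (T : finType) (f : {ffun T -> 'I_#|T|}) (x : T) : nat :=
  (nat_of_ord (f x)).+1.

Definition weight (T : finType) (e : rel T) (f : {ffun T -> 'I_#|T|}) (u : T)
  : nat := \sum_(x | e u x) label f x.

Definition ld_antimagic (T : finType) (e : rel T) (f : {ffun T -> 'I_#|T|})
  : bool :=
  injectiveb f && [forall u, forall v, e u v ==> (weight e f u != weight e f v)].

Definition nweights (T : finType) (e : rel T) (f : {ffun T -> 'I_#|T|}) : nat :=
  size (undup [seq weight e f x | x <- enum T]).

(* chi_ld(G): minimum of nweights over local distance antimagic labelings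
   (the default #|T|.+1 is never attained by a labeling, so it only arises
   when there are no such labelings). *)
Definition chi_ld (T : finType) (e : rel T) : nat :=
  \big[minn/#|T|.+1]_(f : {ffun T -> 'I_#|T|} | ld_antimagic e f) nweights e f.

(* Main.v *)
Require Import Defs.
From mathcomp Require Import all_boot.
From mathcomp Require Import zify.

Lemma divmod_inj k r r' i j : i < k -> j < k -> r*k+i = r'*k+j -> r = r' /\ i = j.
Proof.
move=> hi hj H.
have k0 : 0 < k by lia.
have H1 := congr1 (fun x => x %/ k) H; have H2 := congr1 (fun x => x %% k) H.
move: H1 H2 => /=; rewrite !divnMDl // !modnMDl !divn_small // !modn_small // !addn0.
by [].
Qed.

Definition vlab (m k r i : nat) : nat :=
  if i < k then r*k+i else (m*(k+k)).-1 - (r*k + (i-k)).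

Lemma vlab_lt m k r i : r < m -> i < k+k -> vlab m k r i < m*(k+k).
Proof.
rewrite /vlab => hr hi.
have h1 : r.+1*k <= m*k := leq_mul hr (leqnn k).
rewrite mulSn in h1; rewrite mulnDr.
case: ifP => hik; lia.
Qed.

Lemma vlab_inj m k r r' i j : r < m -> r' < m -> i < k+k -> j < k+k ->
  vlab m k r i = vlab m k r' j -> r = r' /\ i = j.
Proof.
rewrite /vlab => hr hr' hi hj.
have h1 : r.+1*k <= m*k := leq_mul hr (leqnn k).
have h2 : r'.+1*k <= m*k := leq_mul hr' (leqnn k).
rewrite mulSn in h1; rewrite mulSn in h2; rewrite mulnDr.
case: ifP => hik; case: ifP => hjk.
- by apply: divmod_inj.
- lia.
- lia.
- move=> H.
  have : r * k + (i - k) = r' * k + (j - k) by lia.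
  move=> H'. have [||-> Hij] := divmod_inj k r r' (i-k) (j-k) _ _ H'; [lia|lia|]. split=> //; lia.
Qed.

Lemma vlab_pair m k r i : r < m -> i < k ->
  (vlab m k r i).+1 + (vlab m k r (i+k)).+1 = (m*(k+k)).+1.
Proof.
rewrite /vlab => hr hi.
have h1 : r.+1*k <= m*k := leq_mul hr (leqnn k).
rewrite mulSn in h1; rewrite mulnDr hi.
have -> : (i + k < k) = false by lia.
rewrite addnK. lia.
Qed.

Lemma vlab_sum m k r : r < m ->
  \sum_(j < k+k) (vlab m k r j).+1 = k * (m*(k+k)).+1.
Proof.
move=> hr.
rewrite -(big_mkord xpredT (fun j => (vlab m k r j).+1)).
rewrite (big_cat_nat _ (n:=k)) //= ?leq_addr //.
have -> : \sum_(k <= i < k+k) (vlab m k r i).+1 = \sum_(0 <= i < k) (vlab m k r (i+k)).+1.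
  by rewrite -{1}[k]add0n big_addn addnK.
rewrite -big_split /=.
rewrite (eq_big_nat _ _ (F2 := fun _ => (m*(k+k)).+1)).
  by rewrite sum_nat_const_nat subn0.
by move=> i /andP[_ hi]; apply: vlab_pair.
Qed.

Lemma bigmin_leq (I : finType) (P : pred I) (F : I -> nat) x i :
  P i -> \big[minn/x]_(j | P j) F j <= F i.
Proof.
move=> Pi; rewrite /index_enum.
have : i \in Finite.enum I by rewrite -enumT mem_enum.
elim: (Finite.enum I) => [//|a s IH]; rewrite inE big_cons.
case/orP => [/eqP <-|His].
  by rewrite Pi geq_minl.
case: ifP => _; last exact: IH.
by rewrite geq_min IH ?orbT.
Qed.

Theorem mainTheorem17 (T : finType) (e : rel T) (n : nat) (A B : {set T}) :
  simple_graph e -> no_isolated e ->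
  2 <= n -> ~~ odd n ->
  1 < #|T| ->
  ~ regular e ->
  bipartition e A B ->
  (forall x y, x \in A -> y \in A -> deg e x = deg e y) ->
  (forall x y, x \in B -> y \in B -> deg e x = deg e y) ->
  chi_ld (lexprod e (@edgeless n)) = 2.
Proof.
move=> [esym eirr] noiso n2 nodd mT nreg [AB0 [ABT bip]] degA degB.
have [k nk] : exists k, n = k + k.
  exists n./2; rewrite -{1}(odd_double_half n) (negbTE nodd) add0n addnn //.
subst n.
have k0 : 0 < k by lia.
set e' := lexprod e (@edgeless (k+k)).
set m := #|T|.
have cardN : #|{: T * 'I_(k+k)}| = m * (k+k) by rewrite card_prod card_ord.
pose vv (p : T * 'I_(k+k)) := vlab m k (enum_rank p.1) p.2.
have vv_lt p : vv p < #|{: T * 'I_(k+k)}|.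
  by rewrite cardN; apply: vlab_lt => //; apply: ltn_ord.
pose f : {ffun T * 'I_(k+k) -> 'I_#|{: T * 'I_(k+k)}|} := [ffun p => Ordinal (vv_lt p)].
have labf p : label f p = (vv p).+1 by rewrite /label ffunE.
pose c := k * (m * (k+k)).+1.
have c0 : 0 < c by rewrite /c muln_gt0 k0.
have blk g : \sum_(j < k+k) label f (g, j) = c.
  under eq_bigr do rewrite labf.
  have := @vlab_sum m k _ (ltn_ord (enum_rank g)). by rewrite /vv /c /=.
have wt g i : weight e' f (g, i) = deg e g * c.
  rewrite /weight.
  transitivity (\sum_(p | e g p.1 && true) label f (p.1, p.2)).
    apply: eq_big => [p|[p1 p2] _ //].
    by rewrite /e' /lexprod /edgeless /= andbF orbF andbT.
  rewrite -(pair_big_dep (fun g' => e g g') (fun _ _ => true) (fun a b => label f (a, b))) /=.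
  under eq_bigr do rewrite blk.
  rewrite sum_nat_const /deg; congr (_ * _).
  by apply: eq_card => y; rewrite inE.
have hdeg u v : u \in A -> v \in B -> deg e u != deg e v.
  move=> uA vB; apply/eqP => Heq; apply: nreg => x y.
  suff H : forall z, deg e z = deg e u by rewrite !H.
  move=> z; have : z \in A :|: B by rewrite ABT inE.
  rewrite inE => /orP [zA|zB]; first exact: degA.
  by rewrite Heq; apply: degB.
have hedge u v : e u v -> deg e u != deg e v.
  move=> h; case/orP: (bip u v h) => /andP [h1 h2]; first exact: hdeg.
  by rewrite eq_sym; apply: hdeg.
have fanti : ld_antimagic e' f.
  apply/andP; split.
    apply/injectiveP => p q /(congr1 val); rewrite !ffunE /=.
    case: p q => [g i] [g' j] H.
    have [h1 h2] := @vlab_inj m k _ _ _ _ (ltn_ord (enum_rank g)) (ltn_ord (enum_rank g')) (ltn_ord i) (ltn_ord j) H.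
    congr pair; first by apply: enum_rank_inj; apply: val_inj.
    by apply: val_inj.
  apply/forallP => [[g i]]; apply/forallP => [[g' j]]; apply/implyP.
  rewrite /e' /lexprod /edgeless /= andbF orbF => h.
  by rewrite !wt eqn_pmul2r //; apply: hedge.
have memAB w : (w \in A) || (w \in B).
  have : w \in A :|: B by rewrite ABT inE.
  by rewrite inE.
have : [exists x, exists y, deg e x != deg e y].
  case: (boolP [exists x, exists y, deg e x != deg e y]) => // /existsPn H.
  exfalso; apply: nreg => x y.
  by move: (H x) => /existsPn /(_ y) /negPn /eqP.
move=> /existsP [x /existsP [y nxy]].
have hall z : deg e z \in [:: deg e x; deg e y].
  case/orP: (memAB z) => hz; case/orP: (memAB x) => hx; case/orP: (memAB y) => hy;
  rewrite !inE;
  first [ by rewrite (degA _ _ hz hx) eqxx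
        | by rewrite (degB _ _ hz hx) eqxx
        | by rewrite (degA _ _ hz hy) eqxx orbT
        | by rewrite (degB _ _ hz hy) eqxx orbT
        | by rewrite (degA _ _ hx hy) eqxx in nxy
        | by rewrite (degB _ _ hx hy) eqxx in nxy ].
have Hup : nweights e' f <= 2.
  rewrite /nweights.
  apply: (leq_trans (uniq_leq_size (undup_uniq _) (s2 := [:: deg e x * c; deg e y * c]) _)) => //.
  move=> w; rewrite mem_undup => /mapP [[g i] _ ->]; rewrite wt.
  by move: (hall g); rewrite !inE => /orP [/eqP -> | /eqP ->]; rewrite eqxx ?orbT.
have [z0 _] : exists z : T, z \in T by apply/card_gt0P; apply: ltnW.
have [z1 ez] := noiso z0.
have o : 'I_(k+k) by exists 0; lia.
have Hlow g : ld_antimagic e' g -> 2 <= nweights e' g.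
  move=> /andP [_ /forallP /(_ (z0, o)) /forallP /(_ (z1, o)) /implyP H].
  have H' := H ltac:(by rewrite /e' /lexprod /= ez).
  rewrite /nweights.
  have -> : 2 = size [:: weight e' g (z0, o); weight e' g (z1, o)] by [].
  apply: uniq_leq_size; first by rewrite /= inE H'.
  by move=> w; rewrite !inE mem_undup => /orP [/eqP -> | /eqP ->]; apply: map_f; rewrite mem_enum.
rewrite /chi_ld; apply/eqP; rewrite eqn_leq; apply/andP; split.
  exact: leq_trans (@bigmin_leq _ _ _ _ _ fanti) Hup.
apply: (big_ind (fun x => 2 <= x)).
- rewrite cardN; have : 1 < m by []. lia.
- by move=> a b ha hb; rewrite leq_min ha hb.
- exact: Hlow.
Qed.
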